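(* Let $t\in\mathbb{R}$, $\mu>0$, $\sigma>0$, $\lambda>0$ with $\lambda\ge(\mu-t)_-$. Let $\mathcal{L}^+_{\lambda}(\mu,\sigma)$ be the set of probability distributions $F$ on $\mathbb{R}$ such that, for $X\sim F$, $\mathbb{E}^F[X]=\mu$, $\mathbb{E}^F[X^2]=\mu^2+\sigma^2$, $F(0-)=0$, and $\mathbb{E}^F[(X-t)_-]\le\lambda$. Then $\mathcal{L}^+_{\lambda}(\mu,\sigma)$ is non-empty if and only if either $\lambda>(\mu-t)_-$, or $\lambda=(\mu-t)_-$ and $\sigma^2\le\mu(t-\mu)$.
   Context: For $x\in\mathbb{R}$, $(x)_-=\max\{-x,0\}$. $F(0-)=\mathbb{P}(X<0)$ under $F$. *)

(* Defs.v *)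
From HB Require Import structures.
From mathcomp Require Import all_boot all_order all_algebra.
From mathcomp Require Import all_classical all_reals all_analysis.
Set Implicit Arguments. Unset Strict Implicit. Unset Printing Implicit Defensive.
Import Order.TTheory GRing.Theory Num.Theory.
Local Open Scope classical_set_scope.
Local Open Scope ring_scope.

Definition negpart (R : realType) (x : R) : R := Num.max (- x) 0.

Definition Lplus (R : realType) (t mu sigma lam : R) : set (probability R R) :=
  [set P | [/\ P.-integrable [set: R] (fun x => x%:E),
              (\int[P]_x (x%:E) = mu%:E)%E,
              (\int[P]_x ((x ^+ 2)%:E) = (mu ^+ 2 + sigma ^+ 2)%:E)%E,
              P [set x | x < 0] = 0%E &
              (\int[P]_x ((negpart (x - t))%:E) <= lam%:E)%E]].

(* Main.v *)
Require Import Defs.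
From HB Require Import structures.
From mathcomp Require Import all_boot all_order all_algebra.
From mathcomp Require Import all_classical all_reals all_analysis.
From mathcomp Require Import measurable_realfun.
From mathcomp Require Import ring lra.
Import Order.TTheory GRing.Theory Num.Theory.
Local Open Scope classical_set_scope.
Local Open Scope ring_scope.
Set Implicit Arguments. Unset Strict Implicit. Unset Printing Implicit Defensive.

Definition tp (R : realType) (x1 x2 : R) (b : bool) : R := if b then x2 else x1.

Lemma measurable_tp (R : realType) (x1 x2 : R) : measurable_fun [set: bool] (tp x1 x2).
Proof. by move=> _ Y _; rewrite setTI; exact: I. Qed.

HB.instance Definition _ (R : realType) (x1 x2 : R) :=
  isMeasurableFun.Build _ _ bool R (tp x1 x2) (measurable_tp x1 x2).

Lemma measurable_negpart (R : realType) (t : R) : measurable_fun [set: R] (fun x => negpart (x - t)).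
Proof.
rewrite /negpart.
have -> : (fun x => Num.max (- (x - t)) 0) = (fun x => - (x - t)) \max (fun _ => 0).
  by apply/funext => x.
apply: measurable_maxr => //.
by apply: measurableT_comp => //; exact: measurable_funB.
Qed.

Section tpsec.
Context (R : realType) (x1 x2 p : R).
Hypotheses (x10 : 0 <= x1) (x20 : 0 <= x2) (p0 : 0 <= p) (p1 : p <= 1).

Definition tpP : probability R R := distribution (bernoulli_prob p) (tp x1 x2).

Lemma p01 : 0 <= p <= 1. Proof. by rewrite p0 p1. Qed.

Lemma tp_int_bool (h : R -> R) : (forall b, 0 <= h (tp x1 x2 b)) ->
  (bernoulli_prob p).-integrable [set: bool] (fun b => (h (tp x1 x2 b))%:E).
Proof.
move=> h0; apply/integrableP; split.
  by move=> _ Y _; rewrite setTI; exact: I.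
rewrite integral_bernoulli_prob ?p01; last by move=> b; exact: abse_ge0.
rewrite !abse_EFin -!EFinM -EFinD ltry.
all: by [].
Qed.

Lemma tp_integral (h : R -> R) : measurable_fun [set: R] h ->
  (forall b, 0 <= h (tp x1 x2 b)) ->
  (\int[tpP]_x (h x)%:E = (p * h x2 + (1 - p) * h x1)%:E)%E.
Proof.
move=> mh h0.
rewrite /tpP integral_distribution //=; last first.
  exact: tp_int_bool.
  exact/measurable_EFinP.
rewrite integral_bernoulli_prob ?p01; last by move=> b; rewrite lee_fin h0.
rewrite /= -!EFinM -EFinD.
all: by [].
Qed.



Lemma tp_Lplus (t mu sigma lam : R) :
  p * x2 + (1 - p) * x1 = mu ->
  p * x2 ^+ 2 + (1 - p) * x1 ^+ 2 = mu ^+ 2 + sigma ^+ 2 ->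
  p * negpart (x2 - t) + (1 - p) * negpart (x1 - t) <= lam ->
  Lplus t mu sigma lam (tpP).
Proof.
move=> h1 h2 h3; split.
- apply: integrable_pushforward => //.
  exact: EFin_measurable.
  rewrite preimage_setT.
  have := @tp_int_bool (fun x => x) ltac:(by case).
  by apply: eq_integrable => // b.
- rewrite (@tp_integral id) //; [by rewrite h1|by case].
- rewrite (@tp_integral (fun x => x ^+ 2)) //.
  + by rewrite h2.
  + by case => /=; rewrite sqr_ge0.
- rewrite /tpP /distribution /pushforward /=.
  have -> : tp x1 x2 @^-1` [set x | x < 0] = set0.
    apply/seteqP; split => // -[] /=; rewrite ltNge ?x10 ?x20 //.
  exact: measure0.
- rewrite (@tp_integral (fun x => negpart (x - t))) //.
  + exact: measurable_negpart.
  + by case => /=; rewrite /negpart le_max lexx orbT.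
Qed.
End tpsec.

Lemma measurable_neg0 (R : realType) : measurable [set x : R | x < 0].
Proof.
rewrite (_ : [set x : R | x < 0] = `]-oo, 0[%classic); first exact: measurable_itv.
by apply/seteqP; split => x /=; rewrite in_itv.
Qed.

Lemma ereal_aux (R : realType) (a : \bar R) (t : R) :
  (0 <= a)%E -> (a + t%:E <= t%:E)%E -> a = 0%E.
Proof.
case: a => [r||] //=; rewrite ?lee_fin -?EFinD ?lee_fin => r0 h.
by congr (_%:E); apply/eqP; rewrite eq_le r0 andbT -(lerD2r t) add0r.
Qed.

Lemma forward (R : realType) (t mu sigma lam : R) (P : probability R R) :
  0 < mu -> 0 < t -> lam = t - mu -> Lplus t mu sigma lam P ->
  sigma ^+ 2 <= mu * (t - mu).
Proof.
move=> mu0 t0 lamE [intx Ex Ex2 PN Eneg].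
set N := [set x : R | x < 0].
have mN : measurable N := @measurable_neg0 R.
set D := [set: R] `\` N.
have mD : measurable D by exact: measurableD.
have D0 x : D x -> 0 <= x by move=> [_ /negP]; rewrite -leNgt.
have ExD : (\int[P]_(x in D) x%:E = mu%:E)%E.
  by rewrite -(negligible_integral mN) //.
have Ex2D : (\int[P]_(x in D) (x ^+ 2)%:E = (mu ^+ 2 + sigma ^+ 2)%:E)%E.
  rewrite -(ge0_negligible_integral mN) //.
  - by apply/measurable_EFinP; apply: measurable_funX.
  - by move=> x _; rewrite lee_fin sqr_ge0.
have EnegD : (\int[P]_(x in D) (negpart (x - t))%:E <= lam%:E)%E.
  rewrite -(ge0_negligible_integral mN) //.
  - by apply/measurable_EFinP; apply: measurable_negpart.
  - by move=> x _; rewrite lee_fin /negpart le_max lexx orbT.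
have EtD : (\int[P]_(x in D) t%:E = t%:E)%E.
  rewrite -(ge0_negligible_integral mN (f := cst t%:E)) //; last by move=> x _; rewrite lee_fin ltW.
  rewrite integral_cst //. set m := (X in (_ * X)%E). have -> : m = 1%E by exact: probability_setT.
  by rewrite mule1.
have mg : measurable_fun D (fun x => (Num.max (x - t) 0)%:E).
  apply/measurable_EFinP.
  have -> : (fun x => Num.max (x - t) 0) = (fun x => x - t) \max (fun _ => 0).
    by apply/funext => x.
  by apply: measurable_maxr => //; exact: measurable_funB.
have g0 x : (0 <= (Num.max (x - t) 0)%:E)%E by rewrite lee_fin le_max lexx orbT.
have key : (\int[P]_(x in D) ((Num.max (x - t) 0)%:E + t%:E) <= t%:E)%E.
  rewrite (eq_integral (fun x : R => (negpart (x - t))%:E + x%:E)%E); last first.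
    move=> x /[!inE] Dx; rewrite -!EFinD /negpart; congr (_%:E).
    case: (leP x t) => xt.
    - rewrite (@max_l _ _ (- (x - t))) ?(@max_r _ _ (x - t)); first by ring.
      + by rewrite subr_le0.
      + by rewrite oppr_ge0 subr_le0.
    - rewrite (@max_r _ _ (- (x - t))) ?(@max_l _ _ (x - t)); first by ring.
      + by rewrite subr_ge0 ltW.
      + by rewrite oppr_le0 subr_ge0 ltW.
  rewrite ge0_integralD //.
  - have ExD' : (\int[P]_(x in D) x%:E <= mu%:E)%E by rewrite ExD.
    have H := leeD EnegD ExD'.
    rewrite -EFinD lamE subrK in H.
    exact: H.
  - by move=> x _; rewrite lee_fin /negpart le_max lexx orbT.
  - by apply/measurable_EFinP; apply: measurable_funS (measurable_negpart t).
rewrite ge0_integralD // in key; last first.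
  by move=> x _; rewrite lee_fin ltW.
rewrite EtD in key.
have Ig0 := ereal_aux (integral_ge0 _ (fun x _ => g0 x)) key.
have ae : ae_eq P D (fun x => (Num.max (x - t) 0)%:E) (cst 0%E).
  apply/(ae_eq_integral_abs P mD mg).
  rewrite -Ig0; apply: eq_integral => x _.
  by rewrite gee0_abs.
have mx2 : measurable_fun D (fun x : R => (x ^+ 2)%:E).
  by apply/measurable_EFinP; apply: measurable_funX.
have mtx : measurable_fun D (fun x : R => (t * x)%:E).
  apply/measurable_EFinP; apply: measurable_funM => //.
have f10 : forall x : R, D x -> (0 <= (x ^+ 2)%:E)%E.
  by move=> x _; rewrite lee_fin sqr_ge0.
have f20 : forall x : R, D x -> (0 <= (t * x)%:E)%E.
  by move=> x Dx; rewrite lee_fin; apply: mulr_ge0; [exact: ltW | exact: D0].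
have H : (\int[P]_(x in D) (x ^+ 2)%:E <= \int[P]_(x in D) (t * x)%:E)%E.
  apply: (@ae_ge0_le_integral _ _ _ P D mD (fun x : R => (x ^+ 2)%:E) (fun x : R => (t * x)%:E)
  f10 mx2 f20 mtx).
  apply: filterS ae => x /= Hx Dx.
  have := Hx Dx => /= -[] gx.
  have xt : x <= t by rewrite -subr_le0 -gx le_max lexx.
  rewrite lee_fin; have := D0 x Dx; nra.
have Etx : (\int[P]_(x in D) (t * x)%:E = (t * mu)%:E)%E.
  rewrite (eq_integral (fun x : R => t%:E * x%:E)%E); last by move=> x _; rewrite EFinM.
  by rewrite ge0_integralZl_EFin ?ExD ?ltW //; move=> x /D0; rewrite lee_fin.
rewrite Ex2D Etx lee_fin in H.
nra.
Qed.

Lemma negpart_le0 (R : realType) (y : R) : y <= 0 -> negpart y = - y.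
Proof. by move=> h; rewrite /negpart max_l // oppr_ge0. Qed.

Lemma negpart_ge0 (R : realType) (y : R) : 0 <= y -> negpart y = 0.
Proof. by move=> h; rewrite /negpart max_r // oppr_le0. Qed.

Lemma ab_facts (R : realType) (a b mu s2 : R) : 0 < a -> 0 < b -> a * b = s2 ->
  a / (a + b) * (mu + b) + (1 - a / (a + b)) * (mu - a) = mu /\
  a / (a + b) * (mu + b) ^+ 2 + (1 - a / (a + b)) * (mu - a) ^+ 2 = mu ^+ 2 + s2.
Proof.
move=> a0 b0 <-.
have ab : a + b != 0 by rewrite gt_eqF // addr_gt0.
split; field; exact: ab.
Qed.

Theorem proposition3 (R : realType) (t mu sigma lam : R) :
  0 < mu -> 0 < sigma -> 0 < lam -> negpart (mu - t) <= lam ->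
  (Lplus t mu sigma lam !=set0 <->
   (negpart (mu - t) < lam \/
    (lam = negpart (mu - t) /\ sigma ^+ 2 <= mu * (t - mu)))).
Proof.
move=> mu0 s0 l0 hl; split.
- case=> P HP.
  case: (ltP (negpart (mu - t)) lam) => h; [by left|right].
  have e : lam = negpart (mu - t) by apply/eqP; rewrite eq_le h hl.
  have e2 : lam = t - mu.
    case: (leP mu t) => mt.
    + by rewrite e negpart_le0 ?opprB // subr_le0.
    + by move: l0; rewrite e negpart_ge0 ?ltxx // subr_ge0 ltW.
  split => //.
  apply: (forward mu0 _ e2 HP).
  have : t = lam + mu by rewrite e2 subrK.
  move=> ->; exact: addr_gt0.
- case=> [h | [e hs]].
  + set d := lam - negpart (mu - t).
    have d0 : 0 < d by rewrite subr_gt0.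
    have s20 : 0 < sigma ^+ 2 by rewrite exprn_gt0.
    have t1 : 0 < `|t| + 1 by rewrite ltr_wpDl.
    set a := Num.min mu (Num.min d (sigma ^+ 2 / (`|t| + 1))).
    have a0 : 0 < a by rewrite !lt_min mu0 d0 divr_gt0.
    have amu : a <= mu by rewrite ge_min lexx.
    have ad : a <= d by rewrite !ge_min lexx orbT.
    have at1 : a <= sigma ^+ 2 / (`|t| + 1) by rewrite !ge_min lexx !orbT.
    set b := sigma ^+ 2 / a.
    have b0 : 0 < b by rewrite divr_gt0.
    have abE : a * b = sigma ^+ 2 by rewrite /b mulrC divfK // gt_eqF.
    have bt : `|t| + 1 <= b.
      by rewrite /b ler_pdivlMr // mulrC -ler_pdivlMr.
    have [h1' h2'] := ab_facts mu a0 b0 abE.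
    have p0 : 0 <= a / (a + b) by rewrite divr_ge0 // ltW // addr_gt0.
    have p1 : a / (a + b) <= 1 by rewrite ler_pdivrMr ?addr_gt0 // mul1r lerDl ltW.
    have x10 : 0 <= mu - a by rewrite subr_ge0.
    have x20 : 0 <= mu + b by rewrite addr_ge0 // ltW.
    exists (tpP (mu - a) (mu + b) (a / (a + b))).
    apply: tp_Lplus => //.
    rewrite (@negpart_ge0 _ (mu + b - t)); last first.
      have := ler_norm t; rewrite subr_ge0; lra.
    rewrite mulr0 add0r.
    have hn : negpart (mu - a - t) <= lam.
      rewrite /negpart ge_max (ltW l0) andbT.
      have : - (mu - t) <= negpart (mu - t) by rewrite /negpart le_max lexx.
      rewrite /d in ad; lra.
    have hn0 : 0 <= negpart (mu - a - t) by rewrite /negpart le_max lexx orbT.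
    apply: le_trans hn; rewrite ler_piMl //; last by rewrite lerBlDr lerDl.
  + have mt : 0 < t - mu.
      by move: l0; rewrite e; case: (leP mu t) => mt;
        [rewrite negpart_le0 ?opprB ?subr_le0 | rewrite negpart_ge0 ?ltxx // subr_ge0 ltW].
    have s20 : 0 < sigma ^+ 2 by rewrite exprn_gt0.
    set b := sigma ^+ 2 / mu.
    have b0 : 0 < b by rewrite divr_gt0.
    have abE : mu * b = sigma ^+ 2 by rewrite /b mulrC divfK // gt_eqF.
    have bt : b <= t - mu by rewrite /b ler_pdivrMr // mulrC.
    have [h1 h2] := ab_facts mu mu0 b0 abE.
    have p0 : 0 <= mu / (mu + b) by rewrite divr_ge0 // ltW // addr_gt0.
    have p1 : mu / (mu + b) <= 1 by rewrite ler_pdivrMr ?addr_gt0 // mul1r lerDl ltW.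
    have x20 : 0 <= mu + b by rewrite addr_ge0 // ltW.
    exists (tpP (mu - mu) (mu + b) (mu / (mu + b))).
    apply: tp_Lplus => //.
    * by rewrite subrr.
    * rewrite negpart_le0 ?negpart_le0; last 2 first.
      - by rewrite subrr sub0r oppr_le0 ltW // (lt_trans mu0) // -subr_gt0.
      - lra.
      rewrite e negpart_le0; last by rewrite subr_le0 -subr_ge0 ltW.
      set p := mu / (mu + b) in h1 *.
      have : p * (mu + b - t) + (1 - p) * (mu - mu - t) = mu - t.
        by rewrite -[in RHS]h1; ring.
      move=> hh; lra.
Qed.
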